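(* Let $T$ and $T'$ be two different host trees of a hypertree $\mathcal{H}$. Then: (1) there exist edges $e\in E(T)\setminus E(T')$ and $e'\in E(T')\setminus E(T)$ such that $T-e+e'$ is also a host tree of $\mathcal{H}$; (2) if $|E(T)\setminus E(T')|=k$, there exists a sequence $T_1,T_2,\dots,T_{k+1}$ of host trees of $\mathcal{H}$ with $T_1=T$, $T_{k+1}=T'$ and, for $1\le i\le k$, $T_{i+1}=T_i-e_i+e_i'$ where $e_i\in E(T)$ and $e_i'\in E(T')$; furthermore, there is no shorter sequence satisfying the same conditions.
   Context: A hypergraph $\mathcal{H}$ has a finite vertex set $V(\mathcal{H})$ and a finite family of nonempty subsets (edges). A host tree is a tree on $V(\mathcal{H})$ in which every edge of $\mathcal{H}$ induces a connected subgraph; a hypertree is a hypergraph with a host tree. *)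

(* Defs.v *)
From mathcomp Require Import all_boot.
Set Implicit Arguments. Unset Strict Implicit. Unset Printing Implicit Defensive.

Definition hypergraph (V : finType) (H : seq {set V}) : Prop :=
  forall h, h \in H -> h != set0.

Definition graph_edges (V : finType) (E : {set {set V}}) : Prop :=
  forall e, e \in E -> #|e| = 2.

Definition adj (V : finType) (E : {set {set V}}) : rel V :=
  [rel x y | [set x; y] \in E].

Definition gconnected (V : finType) (E : {set {set V}}) : Prop :=
  forall x y : V, connect (adj E) x y.

Definition acyclic (V : finType) (E : {set {set V}}) : Prop :=
  forall s : seq V, uniq s -> 3 <= size s -> ~~ cycle (adj E) s.

Definition is_tree (V : finType) (E : {set {set V}}) : Prop :=
  [/\ graph_edges E, gconnected E & acyclic E].

Definition induces_connected (V : finType) (E : {set {set V}}) (h : {set V}) : Prop :=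
  forall x y, x \in h -> y \in h ->
    connect [rel u v | [&& u \in h, v \in h & adj E u v]] x y.

Definition host_tree (V : finType) (H : seq {set V}) (E : {set {set V}}) : Prop :=
  is_tree E /\ forall h, h \in H -> induces_connected E h.

Definition exch (V : finType) (E : {set {set V}}) (e e' : {set V}) : {set {set V}} :=
  (E :\ e) :|: [set e'].

(* a sequence T_0, ..., T_m of host trees from T to T' (indices shifted by one
   w.r.t. the paper), each obtained from the previous one by T_i - e_i + e_i'
   with e_i in E(T), e_i' in E(T') *)
Definition exch_seq (V : finType) (H : seq {set V}) (T T' : {set {set V}})
    (m : nat) (f : nat -> {set {set V}}) : Prop :=
  [/\ f 0 = T, f m = T',
      (forall i, i <= m -> host_tree H (f i)) &
      (forall i, i < m -> exists e e', [/\ e \in T, e' \in T' &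
                                         f i.+1 = exch (f i) e e'])].

(* Main.v *)
Require Import Defs.
From mathcomp Require Import all_boot.
Set Implicit Arguments. Unset Strict Implicit. Unset Printing Implicit Defensive.

Section G.
Variable V : finType.
Implicit Types (E F T : {set {set V}}) (h : {set V}).

Definition hrel E h : rel V := [rel u v | [&& u \in h, v \in h & adj E u v]].

Lemma set2C_ (a b : V) : [set a; b] = [set b; a].
Proof. by rewrite setUC. Qed.

Lemma adj_sym E : symmetric (adj E).
Proof. by move=> a b; rewrite /adj /= set2C_. Qed.

Lemma hrel_sym E h : symmetric (hrel E h).
Proof. by move=> a b; rewrite /hrel /= adj_sym andbCA. Qed.

Lemma csym E a b : connect (adj E) a b = connect (adj E) b a.
Proof. exact: (sym_connect_sym (adj_sym E)). Qed.

Lemma hcsym E h a b : connect (hrel E h) a b = connect (hrel E h) b a.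
Proof. exact: (sym_connect_sym (hrel_sym E h)). Qed.

Lemma conn_mono (r r' : rel V) a b : (forall p q, r p q -> r' p q) ->
  connect r a b -> connect r' a b.
Proof. by move=> H; apply: connect_sub => p q /H; apply: connect1. Qed.

Lemma path_avoid (r r' : rel V) c z q :
  (forall a b, a != c -> b != c -> r a b -> r' a b) ->
  c \notin z :: q -> path r z q -> path r' z q.
Proof.
move=> H; elim: q z => //= w q IH z.
rewrite inE negb_or => /andP[zc cwq] /andP[rzw pq].
move: (cwq); rewrite inE negb_or => /andP[wc _].
rewrite (H _ _ _ _ rzw) 1?eq_sym //=; exact: IH.
Qed.

Lemma set2_neq c (f : {set V}) a b : c \in f -> a != c -> b != c -> [set a; b] != f.
Proof.
move=> cf ac bc; apply/eqP => E2; move: cf; rewrite -E2 !inE.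
by rewrite eq_sym (negbTE ac) eq_sym (negbTE bc).
Qed.

Lemma set2_eq (p q u v : V) : [set p; q] = [set u; v] ->
  (p = u /\ q = v) \/ (p = v /\ q = u).
Proof.
move=> E2.
have pu : p \in [set u; v] by rewrite -E2 !inE eqxx.
have qu : q \in [set u; v] by rewrite -E2 !inE eqxx orbT.
have up : u \in [set p; q] by rewrite E2 !inE eqxx.
have vp : v \in [set p; q] by rewrite E2 !inE eqxx orbT.
move: pu qu up vp; rewrite !inE.
by do 4 (case/orP=> /eqP ?); subst; auto.
Qed.

Lemma conn_ind (r : rel V) (P : V -> Prop) x z :
  P x -> (forall a b, P a -> r a b -> P b) -> connect r x z -> P z.
Proof.
move=> Px H /connectP[p pp ->]; elim: p x Px pp => //= w p IH x Px /andP[rxw pp].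
exact: (IH w (H _ _ Px rxw)).
Qed.

Lemma crossing (r : rel V) (P : pred V) x p : path r x p -> P x -> ~~ P (last x p) ->
  exists p1 v p2, [/\ p = p1 ++ v :: p2, P (last x p1) & ~~ P v].
Proof.
elim: p x => [|w p IH] x /=; first by move=> _ ->.
move=> /andP[_ pp] Px. case Pw: (P w).
  move=> /(IH w pp Pw) [p1 [v [p2 [-> H1 H2]]]].
  by exists (w :: p1), v, p2.
by move=> _; exists [::], w, p; rewrite Pw.
Qed.

Definition bridge E := forall a b, a != b -> [set a; b] \in E ->
  ~~ connect (adj (E :\ [set a; b])) a b.

Lemma acyclic_bridge E : acyclic E -> bridge E.
Proof.
move=> Hac a b ab abE; apply/negP => /connectP[p pp bl].
case: (shortenP pp) bl => p' pp' up' _ bl.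
have pE : path (adj E) a p'.
  by apply: sub_path pp' => s t; rewrite /adj /= inE => /andP[].
case: p' pp' up' pE bl => [|w [|w' q]] /=.
- by move=> _ _ _ abE'; move: ab; rewrite abE' eqxx.
- by move=> /andP[]; rewrite /adj /= => + _ _ _ bw; rewrite bw !inE eqxx.
move=> _ up pE bl.
have := Hac (a :: w :: w' :: q) up isT; rewrite /cycle rcons_path.
by rewrite [path _ _ _]pE /= -bl /adj /= set2C_ abE.
Qed.

Lemma bridge_acyclic E : bridge E -> acyclic E.
Proof.
move=> Hb [|a [|p1 [|p2 q]]] // up _; apply/negP.
rewrite /cycle rcons_path => /andP[pE]; set b := last _ _ => ba.
have bp : b \in p2 :: q by exact: (mem_last p2 q).
move: up; rewrite [uniq _]/= => /andP[]; rewrite !inE !negb_or => /andP[ap1 /andP[ap2 aq]] /andP[].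
move=> /andP[p1p2 p1q] _.
have ab : a != b.
  by apply/negP => /eqP abe; move: bp; rewrite -abe inE (negbTE ap2) (negbTE aq).
have abE : [set a; b] \in E by rewrite set2C_.
apply: (negP (Hb a b ab abE)); apply/connectP; exists [:: p1, p2 & q] => //.
move: pE => /andP[ap1E pE].
change (adj (E :\ [set a; b]) a p1 && path (adj (E :\ [set a; b])) p1 (p2 :: q)).
apply/andP; split.
  rewrite /adj /= in_setD1; rewrite /adj /= in ap1E; rewrite ap1E andbT.
  apply/negP => /eqP/set2_eq [[_ e]|[e _]].
    by move: bp; rewrite -e inE (negbTE p1p2) (negbTE p1q).
  by move: ab; rewrite e eqxx.
have pE2 : path (adj E) p1 (p2 :: q) by [].
apply: (path_avoid (c := a)) pE2; last by rewrite !inE !negb_or ap1 ap2 aq.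
move=> s t sa ta st; rewrite /adj /= in st *; rewrite in_setD1 st andbT.
by rewrite (set2_neq (c := a)) // !inE eqxx.
Qed.


Lemma conn_step (r : rel V) a p q : connect r a p -> r p q -> connect r a q.
Proof. by move=> H1 H2; apply: connect_trans H1 (connect1 H2). Qed.

Lemma comp2 E x y z : gconnected E ->
  connect (adj (E :\ [set x; y])) x z \/ connect (adj (E :\ [set x; y])) y z.
Proof.
move=> cE; move: (cE x z).
apply: (conn_ind (P := fun z => connect (adj (E :\ [set x; y])) x z \/ connect (adj (E :\ [set x; y])) y z)).
  by left; exact: connect0.
  move=> a b Ha abE; case: (eqVneq [set a; b] [set x; y]) => [e|ne].
    have : b \in [set x; y] by rewrite -e !inE eqxx orbT.
    by rewrite !inE => /orP[] /eqP ->; [left|right]; exact: connect0.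
  have ab' : adj (E :\ [set x; y]) a b by rewrite /adj /= in_setD1 ne.
by case: Ha => H; [left|right]; apply: conn_step ab'.
Qed.

Lemma exch_edge T (T' : {set {set V}}) x y : bridge T -> bridge T' -> gconnected T' ->
  [set x; y] \in T -> x != y ->
  exists u v, [/\ [set u; v] \in T', connect (adj (T :\ [set x; y])) x u,
    ~~ connect (adj (T :\ [set x; y])) x v &
    forall h, x \in h -> y \in h -> induces_connected T' h -> u \in h /\ v \in h].
Proof.
move=> bT bT' cT' eT xy.
set e := [set x; y].
have nxy : ~~ connect (adj (T :\ e)) x y := bT x y xy eT.
have /connectP [p pp yl] := cT' x y.
case: (shortenP pp) yl => p' pp' up' _ yl.
have nyl : ~~ [pred z | connect (adj (T :\ e)) x z] (last x p') by rewrite -yl.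
have [p1 [v [p2 [pe Au Av]]]] :=
  crossing (P := [pred z | connect (adj (T :\ e)) x z]) pp' (connect0 _ _) nyl.
move: Au; set u := last x p1 => Au.
move: pp'; rewrite pe cat_path => /andP[pp1 /= /andP[uvT' pp2]].
exists u, v; split => //.
have uv : u != v by apply/negP => /eqP uve; move: Av; rewrite -uve; move: Au => /= ->.
move: up'; rewrite pe -cat_cons cat_uniq => /and3P[_ hn _].
have vn : v \notin x :: p1 by move: hn; rewrite /= negb_or => /andP[].
have un : u \notin v :: p2.
  by apply/negP => /(hasPn hn) /negP; apply; exact: mem_last.
set f := [set u; v].
have vf : v \in f by rewrite !inE eqxx orbT.
have uf : u \in f by rewrite !inE eqxx.
have cxu : connect (adj (T' :\ f)) x u.
  apply/connectP; exists p1 => //; apply: (path_avoid (c := v)) pp1 => // a b av bv ab.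
  by rewrite /adj /= in_setD1 (set2_neq vf av bv); rewrite /adj /= in ab.
have cvy : connect (adj (T' :\ f)) v y.
  apply/connectP; exists p2; last by rewrite yl pe last_cat.
  apply: (path_avoid (c := u)) pp2 => // a b av bv ab.
  by rewrite /adj /= in_setD1 (set2_neq uf av bv); rewrite /adj /= in ab.
have nuv : ~~ connect (adj (T' :\ f)) u v := bT' u v uv uvT'.
move=> h xh yh hc.
have /connectP [q qp ql] : connect (hrel T' h) x y := hc x y xh yh.
have Px : [pred z | connect (adj (T' :\ f)) u z] x by rewrite /= csym.
have Py : ~~ [pred z | connect (adj (T' :\ f)) u z] (last x q).
  rewrite -ql; apply/negP => /= uy.
  by apply: (negP nuv); apply: connect_trans uy _; rewrite csym.
have [q1 [w [q2 [qe Pz Pw]]]] :=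
  crossing (P := [pred z | connect (adj (T' :\ f)) u z]) qp Px Py.
move: Pz; set z := last x q1 => Pz.
move: qp; rewrite qe cat_path => /andP[_ /= /andP[/and3P[zh wh zwT'] _]].
case: (eqVneq [set z; w] f) => [zwf|zwf].
  by case: (set2_eq zwf) => [[<- <-]|[<- <-]].
by move: Pw; rewrite /= (conn_step Pz) // /adj /= in_setD1 zwf.
Qed.

Lemma exch_tree T x y u v : is_tree T -> x != y -> [set x; y] \in T -> u != v ->
  connect (adj (T :\ [set x; y])) x u -> ~~ connect (adj (T :\ [set x; y])) x v ->
  is_tree (exch T [set x; y] [set u; v]).
Proof.
move=> [gT cT aT] xy eT uv Au Av.
have bT := acyclic_bridge aT.
set e := [set x; y] in eT Au Av *; set f := [set u; v].
set T1 := exch T e f.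
have sub1 : forall p q, adj (T :\ e) p q -> adj T1 p q.
  by move=> p q; rewrite /adj /= /T1 /exch in_setU => ->.
have fT1 : adj T1 u v by rewrite /adj /= /T1 /exch in_setU in_set1 eqxx orbT.
have nxy : ~~ connect (adj (T :\ e)) x y := bT x y xy eT.
have Bv : connect (adj (T :\ e)) y v.
  by case: (comp2 x y v cT) => // H; rewrite H in Av.
have cx : forall z, connect (adj T1) x z.
  move=> z; case: (comp2 x y z cT) => H; first exact: conn_mono H.
  apply: connect_trans (conn_mono sub1 Au) _; apply: connect_trans (connect1 fT1) _.
  apply: connect_trans (conn_mono sub1 _) (conn_mono sub1 H).
  by rewrite csym.
split.
- move=> g; rewrite /T1 /exch in_setU in_set1 => /orP[|/eqP ->].
    by rewrite in_setD1 => /andP[_ /gT].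
  by rewrite cards2 uv.
- by move=> a b; apply: connect_trans (cx b); rewrite csym.
apply: bridge_acyclic => a b ab abT1; apply/negP => cab.
have abT1' := abT1; move: abT1'.
rewrite /T1 /exch in_setU in_set1; case: (eqVneq [set a; b] f) => [abf _|abf /= abTe].
  have cab' : connect (adj (T :\ e)) a b.
    apply: conn_mono cab => p q; rewrite /adj /= in_setD1 /T1 /exch in_setU in_set1.
    by case/andP => /negbTE pq; rewrite abf in pq; rewrite pq orbF.
  case: (set2_eq abf) => [[ea eb]|[ea eb]]; subst a b.
    by move: Av; rewrite (connect_trans Au cab').
  by move: Av; rewrite (connect_trans Au _) // csym.
move: abTe; rewrite orbF in_setD1 => /andP[abe abT].
set G := T :\ e :\ [set a; b].
have GTe : forall p q, adj G p q -> adj (T :\ e) p q.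
  by move=> p q; rewrite /adj /= /G in_setD1 => /andP[].
have GTab : forall p q, adj G p q -> adj (T :\ [set a; b]) p q.
  by move=> p q; rewrite /adj /= /G !in_setD1 => /and3P[-> _ ->].
pose Q := connect (adj G) a u \/ connect (adj G) a v.
pose R := fun z => connect (adj G) a z \/ (Q /\ (connect (adj G) u z \/ connect (adj G) v z)).
have RQ : forall p, p = u \/ p = v -> R p -> Q.
  by move=> p [] -> [H|[]] //; [left|right].
have QR : Q -> R u /\ R v.
  by move=> HQ; split; right; split => //; [left|right]; exact: connect0.
have Rb : R b.
  move: cab; apply: (conn_ind (P := R)); first by left; exact: connect0.
  move=> p q Rp; rewrite /adj /= in_setD1 /T1 /exch in_setU in_set1.
  case/andP=> pqab /orP[pqe|/eqP pqf].
    have G1 : adj G p q by rewrite /adj /= /G in_setD1 pqab.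
    case: Rp => [H|[HQ [H|H]]]; first by left; apply: conn_step G1.
      by right; split => //; left; apply: conn_step G1.
    by right; split => //; right; apply: conn_step G1.
  case: (set2_eq pqf) => [[ep eq]|[ep eq]]; subst p q.
    by have [] := QR (RQ u (or_introl erefl) Rp).
  by have [] := QR (RQ v (or_intror erefl) Rp).
have abC : connect (adj (T :\ e)) a b by apply: connect1; rewrite /adj /= in_setD1 abe.
have GG : connect (adj G) a b -> False.
  by move=> H; move: (bT a b ab abT) => /negP; apply; exact: conn_mono GTab H.
have mG := conn_mono GTe.
case: Rb => [|[[Hau|Hav] [Hub|Hvb]]]; first exact: GG.
- by apply: GG; apply: connect_trans Hau Hub.
- have ua : connect (adj (T :\ e)) u a by rewrite csym; exact: mG _ _ Hau.
  have bv : connect (adj (T :\ e)) b v by rewrite csym; exact: mG _ _ Hvb.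
  by move: Av; rewrite (connect_trans (connect_trans (connect_trans Au ua) abC) bv).
- have xb : connect (adj (T :\ e)) x b by apply: connect_trans Au (mG _ _ Hub).
  have xa : connect (adj (T :\ e)) x a by apply: connect_trans xb _; rewrite csym.
  by move: Av; rewrite (connect_trans xa (mG _ _ Hav)).
- by apply: GG; apply: connect_trans Hav Hvb.
Qed.

Lemma hrel_ic E h : induces_connected E h -> forall a b, a \in h -> b \in h ->
  connect (hrel E h) a b.
Proof. by move=> H a b ah bh; exact: H a b ah bh. Qed.

Lemma Lside E x y a h : x \in h -> a \in h -> induces_connected E h ->
  ~~ connect (adj (E :\ [set x; y])) y a -> connect (hrel (E :\ [set x; y]) h) x a.
Proof.
move=> xh ah hc nya.
have /connectP [p pp al] := hrel_ic hc xh ah.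
case: (shortenP pp) al => p' pp' up' _ al.
case: p' pp' up' al => [|w q] /=; first by move=> _ _ ->; exact: connect0.
move=> /andP[/and3P[_ wh xwE] pq] /andP[xwq _] al.
have xe : x \in [set x; y] by rewrite !inE eqxx.
have Hav : forall s t, s != x -> t != x -> hrel E h s t -> adj (E :\ [set x; y]) s t.
  move=> s t sx tx /and3P[_ _ st]; rewrite /adj /= in st *.
  by rewrite in_setD1 st (set2_neq xe sx tx).
case: (eqVneq w y) => [wy|wy].
  subst w; exfalso; move: nya; rewrite al => /negP; apply; apply/connectP; exists q => //.
  exact: (path_avoid Hav).
apply/connectP; exists (w :: q) => //=; apply/andP; split.
  rewrite /hrel /= xh wh /adj /= in_setD1; rewrite /adj /= in xwE; rewrite xwE andbT.
  apply/negP => /eqP /set2_eq [[_ e]|[_ e]]; first by rewrite e eqxx in wy.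
  by move: xwq; rewrite e inE eqxx.
apply: (path_avoid (c := x)) pq => // s t sx tx /and3P[sh th st]; rewrite /hrel /= sh th.
by apply: Hav => //; rewrite /hrel /= sh th.
Qed.

Lemma exch_host T x y u v h : is_tree T -> x != y -> [set x; y] \in T ->
  connect (adj (T :\ [set x; y])) x u -> ~~ connect (adj (T :\ [set x; y])) x v ->
  (x \in h -> y \in h -> u \in h /\ v \in h) ->
  induces_connected T h -> induces_connected (exch T [set x; y] [set u; v]) h.
Proof.
move=> [gT cT aT] xy eT Au Av huv hc.
have bT := acyclic_bridge aT.
set T1 := exch T [set x; y] [set u; v].
have nxy : ~~ connect (adj (T :\ [set x; y])) x y := bT x y xy eT.
have sub1 : forall p q, hrel (T :\ [set x; y]) h p q -> hrel T1 h p q.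
  move=> p q /and3P[ph qh pq]; rewrite /hrel /= ph qh.
  by rewrite /adj /= /T1 /exch in_setU; rewrite /adj /= in pq; rewrite pq.
case: (boolP ((x \in h) && (y \in h))) => [/andP[xh yh]|nxyh]; last first.
  move=> a b ah bh; apply: (conn_mono (r := hrel T h) _ (hrel_ic hc ah bh)).
  move=> p q /and3P[ph qh pq]; rewrite /hrel /= ph qh /=.
  rewrite /adj /= /T1 /exch in_setU in_setD1; rewrite /adj /= in pq; rewrite pq andbT.
  apply/orP; left; apply/negP => /eqP /set2_eq [[e1 e2]|[e1 e2]]; subst;
    by rewrite ph qh ?andbT in nxyh.
have [uh vh] := huv xh yh.
have hc' : induces_connected T h by [].
have cx : forall z, z \in h -> connect (hrel T1 h) x z.
  have side : forall z, z \in h -> connect (adj (T :\ [set x; y])) x z ->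
      connect (hrel T1 h) x z.
    move=> z zh xz; apply: conn_mono sub1 _; apply: Lside => //.
    by apply/negP => yz; move: nxy; rewrite (connect_trans xz) // csym.
  have side2 : forall z, z \in h -> ~~ connect (adj (T :\ [set x; y])) x z ->
      connect (hrel T1 h) y z.
    move=> z zh nxz; apply: conn_mono sub1 _; rewrite set2C_; apply: Lside => //.
    by rewrite set2C_.
  have xy1 : connect (hrel T1 h) x y.
    apply: connect_trans (side u uh Au) _.
    have uv1 : hrel T1 h u v.
      by rewrite /hrel /= uh vh /adj /= /T1 /exch in_setU in_set1 eqxx orbT.
    apply: connect_trans (connect1 uv1) _; rewrite hcsym; exact: side2.
  move=> z zh; case: (boolP (connect (adj (T :\ [set x; y])) x z)) => xz.
    exact: side.
  exact: connect_trans xy1 (side2 z zh xz).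
move=> a b ah bh; apply: connect_trans (cx b bh); rewrite hcsym; exact: cx.
Qed.
End G.

Lemma step (V : finType) (H : seq {set V}) (T T' : {set {set V}}) e0 :
  host_tree H T -> host_tree H T' -> e0 \in T :\: T' ->
  exists e', e' \in T' :\: T /\ host_tree H (exch T e0 e').
Proof.
move=> [tT hT] [[gT' cT' aT'] hT'] /setDP[e0T e0T'].
have tT0 := tT; case: tT0 => [gT cT aT].
have /eqP/cards2P [x [y [xy E0]]] := gT e0 e0T; subst e0.
have [u [v [uvT' Au Av huv]]] :=
  exch_edge (acyclic_bridge aT) (acyclic_bridge aT') cT' e0T xy.
have uv : u != v by apply/negP => /eqP e; move: Av; rewrite -e Au.
have fe : [set u; v] != [set x; y].
  by apply/negP => /eqP e; move: e0T'; rewrite -e uvT'.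
have uvT : [set u; v] \notin T.
  apply/negP => uvT; move: Av; rewrite (conn_step Au) //.
  by rewrite /adj /= in_setD1 fe uvT.
exists [set u; v]; split; first by rewrite inE uvT' uvT.
split; first exact: exch_tree.
move=> h hH; apply: exch_host => //.
  by move=> xh yh; apply: huv => //; exact: hT'.
exact: hT.
Qed.

Lemma nonempty (V : finType) (H : seq {set V}) (T T' : {set {set V}}) :
  host_tree H T -> host_tree H T' -> T != T' -> exists e, e \in T :\: T'.
Proof.
move=> hT hT' TT'.
case: (boolP (T :\: T' == set0)) => [D0|/set0Pn //].
case: (boolP (T' :\: T == set0)) => [D1|/set0Pn [e eT]].
  by move: TT'; rewrite eqEsubset -!setD_eq0 D0 D1.
have [e' [e'T _]] := step hT' hT eT.
by move: e'T; rewrite (eqP D0) in_set0.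
Qed.

Lemma seq_exists (V : finType) (H : seq {set V}) (T' : {set {set V}}) k :
  host_tree H T' -> forall T0, host_tree H T0 -> #|T0 :\: T'| = k ->
  exists f : nat -> {set {set V}}, [/\ f 0 = T0, f k = T',
    forall i, i <= k -> host_tree H (f i) &
    forall i, i < k -> exists e e', [/\ e \in T0 :\: T', e' \in T' &
                                       f i.+1 = exch (f i) e e']].
Proof.
move=> hT'; elim: k => [|k IH] T0 hT0 cT0.
  have E : T0 = T'.
    apply/eqP; apply/negP => /negP ne.
    have [e eT] := nonempty hT0 hT' ne.
    by move: eT; rewrite (cards0_eq cT0) in_set0.
  by exists (fun _ => T0); split => // i _; rewrite E.
have [e eT] : exists e, e \in T0 :\: T'.
  by apply/set0Pn; apply/negP => /eqP E; rewrite E cards0 in cT0.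
have [e' [e'T hT1]] := step hT0 hT' eT.
have e'T' : e' \in T' by move: e'T => /setDP[].
have D : exch T0 e e' :\: T' = (T0 :\: T') :\ e.
  apply/setP => z; rewrite /exch !inE.
  case: (eqVneq z e') => [->|_]; first by rewrite e'T' /= ?andbF.
  by rewrite orbF andbCA.
have c1 : #|exch T0 e e' :\: T'| = k.
  by move: cT0; rewrite (cardsD1 e) eT D add1n => -[].
have [f1 [f10 f1k hf1 sf1]] := IH _ hT1 c1.
exists (fun i => if i is i'.+1 then f1 i' else T0); split => //.
  by case.
case=> [_|i ik]; first by exists e, e'; rewrite f10.
have [e2 [e2' [e2T e2'T ->]]] := sf1 i ik.
exists e2, e2'; split => //.
by move: e2T; rewrite D !inE => /andP[_ ->].
Qed.

Lemma lower_bound (V : finType) (H : seq {set V}) (T T' : {set {set V}}) m f :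
  exch_seq H T T' m f -> #|T :\: T'| <= m.
Proof.
move=> [f0 fm _ st].
have : forall i, i <= m -> #|T :\: T'| <= #|f i :\: T'| + i.
  elim=> [|i IH] im; first by rewrite f0 addn0.
  have [e [e' [_ e'T ->]]] := st i im.
  apply: leq_trans (IH (ltnW im)) _.
  have sub : #|(f i :\: T') :\ e| <= #|exch (f i) e e' :\: T'|.
    apply: subset_leq_card; apply/subsetP => z; rewrite /exch !inE.
    by case/andP=> ze /andP[zT' zf]; rewrite zT' ze zf.
  have AB : #|f i :\: T'| <= (#|exch (f i) e e' :\: T'|).+1.
    rewrite (cardsD1 e (f i :\: T')) -add1n.
    exact: leq_add (leq_b1 _) sub.
  by rewrite addnS -addSn leq_add2r.
by move=> /(_ m (leqnn m)); rewrite fm setDv cards0.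
Qed.

Theorem mainTheorem19 (V : finType) (H : seq {set V}) (T T' : {set {set V}}) :
  hypergraph H -> host_tree H T -> host_tree H T' -> T != T' ->
  (exists e e', [/\ e \in T :\: T', e' \in T' :\: T & host_tree H (exch T e e')]) /\
  (forall k, #|T :\: T'| = k ->
     (exists f, exch_seq H T T' k f) /\
     (forall m f, exch_seq H T T' m f -> k <= m)).
Proof.
move=> _ hT hT' TT'; split.
  have [e eT] := nonempty hT hT' TT'.
  by have [e' [e'T h1]] := step hT hT' eT; exists e, e'.
move=> k ck; split; last by move=> m f /lower_bound; rewrite ck.
have [f [f0 fk hf sf]] := seq_exists hT' hT ck.
exists f; split => // i ik; have [e [e' [eT e'T ->]]] := sf i ik.
by exists e, e'; split => //; move: eT => /setDP[].
Qed.
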